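(* Let $q$ be a prime power and $n$ a positive integer coprime to $q$, and write $n=2^{\nu_2(n)}n'$ with $n'$ odd. The following are equivalent: (i) Type-I duadic splittings of $\mathbb{Z}_n$ exist; (ii) Type-I duadic splittings of $\mathbb{Z}_n$ given by some $q$-translation $\tau_t$ exist; (iii) $0<\nu_2(n)<2\,\nu_2(q-1)$. If these hold, then there is an integer $u$ with $\max\{0,\nu_2(n)-\nu_2(q-1)\}\le u<\min\{\nu_2(n),\nu_2(q-1)\}$, and for such $u$, $\tau_{2^u n'}$ is a $q$-translation of $\mathbb{Z}_n$ (i.e. $q\cdot 2^un'\equiv 2^un'\pmod n$) and Type-I duadic splittings of $\mathbb{Z}_n$ given by $\tau_{2^un'}$ exist.
   Context: $\mathbb{Z}_n=\mathbb{Z}/n\mathbb{Z}$, $\mathbb{Z}_n^*$ its unit group. The multiplier $\mu_q:\mathbb{Z}_n\to\mathbb{Z}_n$ is $i\mapsto qi \bmod n$; a subset $P\subseteq\mathbb{Z}_n$ is $\mu_q$-invariant if $\mu_q(P)=P$. For $s\in\mathbb{Z}_n^*$ and $t\in\mathbb{Z}_n$ with $qt\equiv t\pmod n$, $\rho_{s,t}:\mathbb{Z}_n\to\mathbb{Z}_n$, $i\mapsto s(i+t)\bmod n$; $\tau_t=\rho_{1,t}$ is called a $q$-translation. Type-I duadic splittings of $\mathbb{Z}_n$ given by $\rho_{s,t}$ exist if there is a $\mu_q$-invariant $P\subseteq\mathbb{Z}_n$ such that $\mathbb{Z}_n=P\cup\rho_{s,t}(P)$ is a disjoint union; Type-I duadic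 splittings of $\mathbb{Z}_n$ exist if this holds for some such $s,t$. $\nu_2(m)$ is the $2$-adic valuation of a nonzero integer $m$, $\nu_2(0)=\infty$. *)

(* Defs.v *)
(* Z_n is modelled as 'I_n (residues 0..n-1), n > 0. *)
From mathcomp Require Import all_boot.
Unset Printing Implicit Defensive.

Definition zimg (n : nat) (f : nat -> nat) (P : {set 'I_n}) : {set 'I_n} :=
  [set j : 'I_n | [exists i in P, val j == f (val i) %% n]].

Definition mu (q : nat) : nat -> nat := fun i => q * i.

Definition rho (s t : nat) : nat -> nat := fun i => s * (i + t).

Definition mu_invariant (n q : nat) (P : {set 'I_n}) : Prop :=
  zimg n (mu q) P = P.

Definition duadic_given_by (n q s t : nat) : Prop :=
  exists P : {set 'I_n},
    mu_invariant n q P /\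
    P :&: zimg n (rho s t) P = set0 /\
    P :|: zimg n (rho s t) P = setT.

Definition q_fixed (n q t : nat) : Prop := t < n /\ q * t = t %[mod n].

Definition typeI_exists (n q : nat) : Prop :=
  exists s t, s < n /\ coprime s n /\ q_fixed n q t /\ duadic_given_by n q s t.

(* ... given by some q-translation tau_t = rho_{1,t} *)
Definition typeI_by_translation (n q : nat) : Prop :=
  exists t, q_fixed n q t /\ duadic_given_by n q 1 t.

Definition prime_power (q : nat) : Prop :=
  exists p k, prime p /\ 0 < k /\ q = p ^ k.

Definition nu2 (m : nat) : nat := logn 2 m.

Definition oddpart (n : nat) : nat := n %/ 2 ^ nu2 n.

(* Main.v *)
Require Import Defs.
From mathcomp Require Import all_boot all_algebra all_fingroup all_solvable.
From mathcomp Require Import ring zify.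
Import GRing.Theory.
Open Scope ring_scope.

Fixpoint gQ (S Q : int) (j : nat) : int :=
  if j is j'.+1 then S * gQ S Q j' + Q ^+ j' else 0.
Fixpoint WQ (S Q : int) (j : nat) : int :=
  if j is j'.+1 then Q * WQ S Q j' + gQ S Q j' else 0.

Lemma gQ_id S Q j : (S - Q) * gQ S Q j = S ^+ j - Q ^+ j.
Proof.
elim: j => [|j IH] /=; first by rewrite mulr0 !expr0 subrr.
rewrite mulrDr mulrCA IH !exprS; ring.
Qed.

Lemma WQ_id S Q j : (S - Q) * WQ S Q j.+1 = gQ S Q j.+1 - (Posz j.+1) * Q ^+ j.
Proof.
elim: j => [|j IH].
  by rewrite /= !mulr0 !add0r expr0 mulr1 subrr.
rewrite (_ : WQ S Q j.+2 = Q * WQ S Q j.+1 + gQ S Q j.+1) //.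
rewrite (_ : gQ S Q j.+2 = S * gQ S Q j.+1 + Q ^+ j.+1) //.
have H := gQ_id S Q j.+1.
move: H IH; set g := gQ S Q j.+1; set W := WQ S Q j.+1 => H IH.
transitivity (Q * ((S - Q) * W) + (S - Q) * g); first by ring.
have -> : Posz j.+2 = Posz j.+1 + 1 by rewrite -PoszD addn1.
rewrite IH H exprS.
have E : S * g = Q * g + (S ^+ j.+1 - Q ^+ j.+1) by rewrite -H; ring.
rewrite E !exprS; ring.
Qed.

Lemma key_id (A B U v w n : int) : v * B + w * n = 1 ->
  (A - B) * U * v + U = U * A * v + U * w * n.
Proof.
move=> h; apply/eqP; rewrite -subr_eq0.
have -> : (A - B) * U * v + U - (U * A * v + U * w * n) = U * (1 - (v * B + w * n)) by ring.
by rewrite h subrr mulr0.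
Qed.

Lemma odd_solve (n1 : nat) (S Q U : int) (L : nat) :
  (0 < L)%N -> coprime L n1 -> coprimez Q n1 -> (Posz n1 %| U * gQ S Q L)%Z ->
  exists x, (Posz n1 %| (S - Q) * x + U)%Z.
Proof.
case: L => [//|L'] _ cL cQ dU.
have cLQ : coprimez (Posz L'.+1 * Q ^+ L') n1.
  by rewrite coprimezMl coprimezXl // andbT coprimezE absz_nat.
have [[v w] /= Hvw] := coprimezP _ _ cLQ.
exists (WQ S Q L'.+1 * U * v).
have -> : (S - Q) * (WQ S Q L'.+1 * U * v) = ((S - Q) * WQ S Q L'.+1) * U * v by ring.
rewrite WQ_id (key_id _ _ _ _ _ _ Hvw).
by apply: rpredD; [apply: dvdz_mulr | apply: dvdz_mull; apply: dvdzz].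
Qed.
Lemma two_solve (a b : nat) (D U : int) :
  ~~ (Posz (2 ^ b.+1)%N %| D)%Z -> (Posz (2 ^ b)%N %| U)%Z ->
  exists x, (Posz (2 ^ a)%N %| D * x + U)%Z.
Proof.
move=> nD dU.
have [u [v Huv]] := Bezoutz D (Posz (2 ^ a)%N).
set g := gcdz D _ in Huv.
have dg : (g %| Posz (2 ^ b)%N)%Z.
  rewrite dvdzE absz_nat /g /gcdz absz_nat.
  have : (gcdn `|D| (2 ^ a) %| 2 ^ a)%N by apply: dvdn_gcdr.
  case/dvdn_pfactor => // e lea He; rewrite He.
  apply: dvdn_exp2l; rewrite leqNgt; apply/negP => lt.
  apply: (negP nD); rewrite dvdzE absz_nat.
  apply: dvdn_trans (dvdn_exp2l 2 lt) _.
  by rewrite -He dvdn_gcdl.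
have gU : (g %| U)%Z by apply: dvdz_trans dg dU.
have E : U = (U %/ g)%Z * g by rewrite divzK.
move: (U %/ g)%Z E => k E.
exists (- (u * k)).
rewrite E -Huv.
have -> : D * - (u * k) + k * (u * D + v * Posz (2 ^ a)%N) =
  (k * v) * Posz (2 ^ a)%N by ring.
by apply: dvdz_mull; apply: dvdzz.
Qed.
Lemma nat_cong (n a b : nat) : (Posz n %| Posz a - Posz b)%Z -> (a = b %[mod n])%N.
Proof.
rewrite -eqz_mod_dvd !modz_nat => /eqP [] //.
Qed.

Lemma int_cong (n a b : nat) : (a = b %[mod n])%N -> (Posz n %| Posz a - Posz b)%Z.
Proof.
move=> H; rewrite -eqz_mod_dvd !modz_nat H.
by [].
Qed.

Lemma PoszX (m e : nat) : Posz (m ^ e)%N = (Posz m) ^+ e.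
Proof. by rewrite -!natz natrX. Qed.

Definition rhof (s t : nat) (x : nat) : nat := (s * (x + t))%N.
Definition Rr s t j := iter j (rhof s t) 0%N.

Lemma iter_rho s t j x : iter j (rhof s t) x = (s ^ j * x + Rr s t j)%N.
Proof.
elim: j => [|j IH] /=; first by rewrite expn0 mul1n addn0.
rewrite IH /Rr /= /rhof expnS mulnDr mulnDr mulnA. by rewrite !mulnDr addnA.
Qed.

Lemma Rr_add s t i j : Rr s t (i + j) = (s ^ i * Rr s t j + Rr s t i)%N.
Proof. by rewrite /Rr iterD iter_rho. Qed.

Lemma RrS s t j : Rr s t j.+1 = (s * (Rr s t j + t))%N.
Proof. by []. Qed.

Lemma Rr_dvd d c s t j : (d %| c * t)%N -> (d %| c * Rr s t j)%N.
Proof.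
move=> h; elim: j => [|j IH]; first by rewrite muln0 dvdn0.
by rewrite RrS mulnCA mulnDr dvdn_mull // dvdn_add.
Qed.

Fixpoint g1 (S : nat) (j : nat) : nat := if j is j'.+1 then (S * g1 S j' + 1)%N else 0%N.

Lemma Rr_mul s t m j : Rr s t (m * j) = (Rr s t m * g1 (s ^ m) j)%N.
Proof.
elim: j => [|j IH]; first by rewrite muln0 /= muln0.
by rewrite mulnS Rr_add IH /= mulnDr muln1 mulnCA.
Qed.

Lemma Rr_phi n1 s t : coprime s n1 -> (n1 %| Rr s t (totient n1 * n1))%N.
Proof.
move=> cs.
have E : forall j, (Rr s t (totient n1 * j) = j * Rr s t (totient n1) %[mod n1])%N.
  elim=> [|j IH]; first by rewrite muln0.
  rewrite mulnS Rr_add -modnDml -modnMml Euler_exp_totient // modnMml mul1n.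
  by rewrite modnDml -modnDml IH modnDml mulSn addnC.
by rewrite /dvdn (E n1) modnMr.
Qed.

Lemma g1_gQ (S : nat) j : Posz (g1 S j) = gQ (Posz S) 1 j.
Proof.
elim: j => [|j IH] //=.
by rewrite PoszD PoszM IH expr1n.
Qed.

Lemma pow_cong (n1 : nat) (U q : int) j :
  (Posz n1 %| U * (q - 1))%Z -> (Posz n1 %| U * (q ^+ j - 1))%Z.
Proof.
move=> h; elim: j => [|j IH]; first by rewrite expr0 subrr mulr0 dvdz0.
have -> : U * (q ^+ j.+1 - 1) = q * (U * (q ^+ j - 1)) + U * (q - 1)
  by rewrite exprS; ring.
by apply: rpredD => //; apply: dvdz_mull.
Qed.

Lemma gQ_cong (n1 : nat) (S Q U : int) j :
  (Posz n1 %| U * (Q - 1))%Z -> (Posz n1 %| U * gQ S Q j - U * gQ S 1 j)%Z.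
Proof.
move=> h; elim: j => [|j IH]; first by rewrite /= mulr0 subrr dvdz0.
have -> : U * gQ S Q j.+1 - U * gQ S 1 j.+1 =
   S * (U * gQ S Q j - U * gQ S 1 j) + U * (Q ^+ j - 1).
  by rewrite /= expr1n; ring.
by apply: rpredD; [apply: dvdz_mull | apply: pow_cong].
Qed.

Lemma odd_geo (q m : nat) : odd q -> odd (\sum_(i < m) q ^ i)%N = odd m.
Proof.
move=> oq; elim: m => [|m IH]; first by rewrite big_ord0.
by rewrite big_ord_recr /= oddD IH oddX oq orbT addbT.
Qed.

Lemma fix_exists (n q s t : nat) : (0 < n)%N -> (1 < q)%N -> coprime q n -> coprime s n ->
  (n %| (q - 1) * t)%N ->
  (logn 2 n = 0%N \/ (2 * logn 2 (q - 1) <= logn 2 n)%N) ->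
  exists m k i : nat, odd m /\ (s ^ m * i + Rr s t m = q ^ k * i %[mod n])%N.
Proof.
move=> n0 q1 cqn csn dnt Ha.
have p2 : prime 2 by [].
set a := logn 2 n.
have [n1 c2n1 En] := pfactor_coprime p2 n0.
rewrite -/a in En.
have n1_0 : (0 < n1)%N by move: n0; rewrite En muln_gt0 => /andP[].
have dn1 : (n1 %| n)%N by rewrite En dvdn_mulr.
have d2a : (2 ^ a %| n)%N by rewrite En dvdn_mull.
set N := (totient n1 * n1)%N.
have N0 : (0 < N)%N by rewrite muln_gt0 totient_gt0 n1_0.
have [m c2m EN] := pfactor_coprime p2 N0.
set L := (2 ^ logn 2 N)%N in EN.
have om : odd m by rewrite -coprime2n.
set b := logn 2 (q - 1).
set U := Rr s t m.
set S : int := Posz (s ^ m)%N.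
set k := if (Posz (2 ^ b.+1)%N %| S - 1)%Z then m else 0%N.
set Q : int := Posz (q ^ k)%N.
have [x1 Hx1] : exists x1, (Posz n1 %| (S - Q) * x1 + Posz U)%Z.
  apply: (@odd_solve n1 S Q U L).
  - by rewrite expn_gt0.
  - by rewrite coprimeXl.
  - rewrite coprimezE !absz_nat coprimeXl //.
    exact: coprime_dvdr dn1 cqn.
  - have hU : (Posz n1 %| Posz U * (Q - 1))%Z.
      rewrite /Q PoszX; apply: pow_cong.
      rewrite (_ : Posz q - 1 = Posz (q - 1)%N); last by rewrite subzn // ltnW.
      rewrite -PoszM dvdzE !absz_nat mulnC.
      apply: Rr_dvd; exact: dvdn_trans dn1 dnt.
    have h2 : (Posz n1 %| Posz U * gQ S 1 L)%Z.
      rewrite /S -g1_gQ -PoszM dvdzE !absz_nat /U -Rr_mul -EN.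
      by apply: Rr_phi; exact: coprime_dvdr dn1 csn.
    have -> : Posz U * gQ S Q L = (Posz U * gQ S Q L - Posz U * gQ S 1 L) + Posz U * gQ S 1 L
      by rewrite subrK.
    by apply: rpredD => //; apply: gQ_cong.
have [x2 Hx2] : exists x2, (Posz (2 ^ a)%N %| (S - Q) * x2 + Posz U)%Z.
  case: Ha => [a0|hab].
    by exists 0; rewrite /a a0 expn0 dvd1z.
  case: (posnP a) => [a0|apos].
    by exists 0; rewrite a0 expn0 dvd1z.
  have oq : odd q.
    have : coprime q 2.
      apply: coprime_dvdr cqn; apply: dvdn_trans d2a.
      by rewrite -{1}(expn1 2) dvdn_exp2l.
    by rewrite coprimen2.
  apply: (@two_solve a b (S - Q) (Posz U)).
  - rewrite /Q /k; case: ifP => h.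
      apply/negP => h2.
      have h3 : (Posz (2 ^ b.+1)%N %| Posz (q ^ m - 1)%N)%Z.
        rewrite -subzn; last by rewrite expn_gt0 ltnW.
        have -> : Posz (q ^ m)%N - Posz 1%N = (S - 1) - (S - Posz (q ^ m)%N) by ring.
        by apply: rpredB.
      move: h3; rewrite dvdzE !absz_nat subn1 predn_exp Gauss_dvdl.
        rewrite pfactor_dvdn //; last by rewrite -subn1 subn_gt0.
        by rewrite -subn1 -/b ltnn.
      by rewrite coprimeXl // coprime2n odd_geo.
    by rewrite expn0 h.
  - rewrite dvdzE !absz_nat.
    rewrite /U -[Rr s t m]mul1n; apply: Rr_dvd; rewrite mul1n.
    case: (posnP t) => [->|tpos]; first by rewrite dvdn0.
    have q0 : (0 < q - 1)%N by rewrite subn_gt0.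
    have : (2 ^ a %| (q - 1) * t)%N by apply: dvdn_trans d2a dnt.
    rewrite !pfactor_dvdn // ?muln_gt0 ?q0 // lognM // -/b => h.
    move: hab; rewrite -/a -/b => hab.
    lia.
exists m, k.
have cz : coprimez (Posz n1) (Posz (2 ^ a)%N).
  by rewrite coprimezE !absz_nat coprimeXr // coprime_sym.
set x := zchinese (Posz n1) (Posz (2 ^ a)%N) x1 x2.
have h1 : (Posz n1 %| (S - Q) * x + Posz U)%Z.
  have := zchinese_modl cz x1 x2; rewrite -/x => /eqP; rewrite eqz_mod_dvd => d.
  have -> : (S - Q) * x + Posz U = (S - Q) * (x - x1) + ((S - Q) * x1 + Posz U) by ring.
  by apply: rpredD => //; apply: dvdz_mull.
have h2 : (Posz (2 ^ a)%N %| (S - Q) * x + Posz U)%Z.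
  have := zchinese_modr cz x1 x2; rewrite -/x => /eqP; rewrite eqz_mod_dvd => d.
  have -> : (S - Q) * x + Posz U = (S - Q) * (x - x2) + ((S - Q) * x2 + Posz U) by ring.
  by apply: rpredD => //; apply: dvdz_mull.
have hn : (Posz n %| (S - Q) * x + Posz U)%Z by rewrite En PoszM Gauss_dvdz // h1 h2.
have nz : Posz n != 0 by rewrite -lt0n.
exists `|(x %% Posz n)%Z|%N; split => //.
apply: nat_cong.
rewrite PoszD !PoszM (gez0_abs (modz_ge0 _ nz)) -/S -/Q -/U.
have dd : (Posz n %| (x %% Posz n)%Z - x)%Z.
  by rewrite -eqz_mod_dvd modz_mod.
have -> : S * (x %% Posz n)%Z + Posz U - Q * (x %% Posz n)%Z =
   (S - Q) * ((x %% Posz n)%Z - x) + ((S - Q) * x + Posz U) by ring.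
by apply: rpredD => //; apply: dvdz_mull.
Qed.

Definition ordm {n : nat} (n0 : (0 < n)%N) (x : nat) : 'I_n := Ordinal (ltn_pmod x n0).

Lemma ordm_cong {n} (n0 : (0 < n)%N) x y : (x = y %[mod n])%N -> ordm n0 x = ordm n0 y.
Proof. by move=> h; apply: val_inj => /=. Qed.

Lemma ordm_val {n} (n0 : (0 < n)%N) (j : 'I_n) : ordm n0 j = j.
Proof. by apply: val_inj => /=; rewrite modn_small. Qed.

Lemma zimg_ordm {n} (n0 : (0 < n)%N) f P x :
  (forall y z, f y = f z %[mod n] -> y = z %[mod n])%N ->
  (forall y, f (y %% n) = f y %[mod n])%N ->
  (ordm n0 (f x) \in zimg n f P) = (ordm n0 x \in P).
Proof.
move=> finj fmod; rewrite inE; apply/existsP/idP.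
  case=> j /andP [jP /eqP /= h].
  have e := finj _ _ h.
  by rewrite (ordm_cong n0 _ _ e) ordm_val.
move=> xP; exists (ordm n0 x); rewrite xP /=.
by apply/eqP; rewrite fmod.
Qed.

Lemma cancel_mod {n c x y} : coprime c n -> (c * x = c * y %[mod n])%N -> (x = y %[mod n])%N.
Proof.
move=> cc h; apply: nat_cong.
have := int_cong _ _ _ h; rewrite !PoszM -mulrBr Gauss_dvdzr //.
by rewrite coprimezE !absz_nat coprime_sym.
Qed.

Lemma part_mem n (P Z : {set 'I_n}) (y : 'I_n) :
  P :&: Z = set0 -> P :|: Z = setT -> (y \in P) = ~~ (y \in Z).
Proof.
move=> hI hU.
have h1 : y \in P :|: Z by rewrite hU inE.
case yZ : (y \in Z) => /=.
  apply/negP => yP.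
  have : y \in P :&: Z by rewrite inE yP yZ.
  by rewrite hI inE.
by move: h1; rewrite inE yZ orbF.
Qed.

Lemma nec (q n s t : nat) : (0 < n)%N -> (1 < q)%N -> coprime q n -> coprime s n ->
  q_fixed n q t -> duadic_given_by n q s t ->
  (0 < nu2 n)%N /\ (nu2 n < 2 * nu2 (q - 1))%N.
Proof.
move=> n0 q1 cqn csn [tn qt] [P [hmu [hI hU]]].
have dnt : (n %| (q - 1) * t)%N.
  move/eqP: qt; rewrite eqn_mod_dvd; last by rewrite leq_pmull // ltnW.
  by rewrite mulnBl mul1n.
set inP := fun x => ordm n0 x \in P.
have muP : forall x, inP (q * x)%N = inP x.
  move=> x; rewrite /inP -{1}hmu.
  apply: (@zimg_ordm n n0 (mu q) P x).
    by move=> y z; apply: cancel_mod.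
  by move=> y; rewrite /mu modnMmr.
have rhoP : forall x, inP (s * (x + t))%N = ~~ inP x.
  move=> x; rewrite /inP (part_mem _ _ _ _ hI hU).
  congr (~~ _).
  apply: (@zimg_ordm n n0 (rho s t) P x).
    move=> y z /(cancel_mod csn) h.
    by move/eqP: h; rewrite eqn_modDr => /eqP.
  by move=> y; rewrite /rho -modnMmr modnDml modnMmr.
have iterP : forall j x, inP (iter j (rhof s t) x) = odd j (+) inP x.
  elim=> [|j IH] x //=.
  by rewrite /rhof rhoP IH; case: (odd j); case: (inP x).
have powP : forall k x, inP (q ^ k * x)%N = inP x.
  elim=> [|k IH] x; first by rewrite expn0 mul1n.
  by rewrite expnS -mulnA muP IH.
rewrite /nu2.
case: (boolP ((0 < logn 2 n)%N && (logn 2 n < 2 * logn 2 (q - 1))%N)) => [/andP[]//|hn].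
exfalso.
have Ha : (logn 2 n = 0%N \/ (2 * logn 2 (q - 1) <= logn 2 n)%N).
  case: (posnP (logn 2 n)) => [h0|hp]; [by left | right].
  by move: hn; rewrite hp /= -leqNgt.
have [m [k [i [om e]]]] := fix_exists n q s t n0 q1 cqn csn dnt Ha.
have := ordm_cong n0 _ _ e.
rewrite -iter_rho => e2.
have := powP k i; rewrite /inP -e2 -/(inP _) iterP om.
rewrite /inP; by case: (ordm n0 i \in P).
Qed.

Lemma inv_mod n q : (0 < n)%N -> coprime q n -> forall j, exists i, (q * i = j %[mod n])%N.
Proof.
move=> n0 cq j.
have : coprimez (Posz q) (Posz n) by rewrite coprimezE !absz_nat.
case/coprimezP => [[u v] /= Huv].
have nz : Posz n != 0 by rewrite -lt0n.
exists `|((u * Posz j) %% Posz n)%Z|%N.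
apply: nat_cong; rewrite PoszM (gez0_abs (modz_ge0 _ nz)).
have dd : (Posz n %| ((u * Posz j) %% Posz n)%Z - u * Posz j)%Z.
  by rewrite -eqz_mod_dvd modz_mod.
have -> : Posz q * ((u * Posz j) %% Posz n)%Z - Posz j =
  Posz q * (((u * Posz j) %% Posz n)%Z - u * Posz j) + (u * Posz q + v * Posz n - 1) * Posz j - v * Posz j * Posz n by ring.
rewrite Huv subrr mul0r addr0.
by apply: rpredB; [apply: dvdz_mull | apply: dvdz_mull; apply: dvdzz].
Qed.

Lemma mod_dvd_cong d n x y : (d %| n)%N -> (x = y %[mod n])%N -> (x = y %[mod d])%N.
Proof. by move=> dn h; rewrite -(modn_dvdm x dn) -(modn_dvdm y dn) h. Qed.

Lemma suff (q n u : nat) : (0 < n)%N -> (1 < q)%N -> coprime q n ->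
  (0 < nu2 n)%N -> (nu2 n < 2 * nu2 (q - 1))%N ->
  (nu2 n - nu2 (q - 1) <= u)%N -> (u < minn (nu2 n) (nu2 (q - 1)))%N ->
  q_fixed n q (2 ^ u * oddpart n) /\ duadic_given_by n q 1 (2 ^ u * oddpart n).
Proof.
move=> n0 q1 cqn apos hab hu1 hu2.
have p2 : prime 2 by [].
rewrite /oddpart /nu2 in hab hu1 hu2 apos *.
set a := logn 2 n in hab hu1 hu2 apos *.
set b := logn 2 (q - 1) in hab hu1 hu2 *.
have [n1 c2n1 En] := pfactor_coprime p2 n0.
rewrite -/a in En.
have -> : (n %/ 2 ^ a)%N = n1 by rewrite {1}En mulnK // expn_gt0.
have n1_0 : (0 < n1)%N by move: n0; rewrite En muln_gt0 => /andP[].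
have on1 : odd n1 by rewrite -coprime2n.
have q0 : (0 < q - 1)%N by rewrite subn_gt0.
have [c _ Eq] := pfactor_coprime p2 q0.
rewrite -/b in Eq.
have ua : (u < a)%N by move: hu2; rewrite leq_min => /andP[].
have ub : (u < b)%N by move: hu2; rewrite leq_min => /andP[].
set t := (2 ^ u * n1)%N.
set M := (2 ^ u.+1)%N.
have Mn : (M %| n)%N by rewrite En dvdn_mull // dvdn_exp2l.
have Mq : (M %| q - 1)%N by rewrite Eq dvdn_mull // dvdn_exp2l.
set f := fun x => odd (x %/ 2 ^ u).
have fE : forall x, f x = odd ((x %% M) %/ 2 ^ u)%N.
  by move=> x; rewrite /f -[odd (x %/ 2 ^ u)]oddb -modn2 modn_divl -expnS.
have fM : forall x y, (x = y %[mod M])%N -> f x = f y.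
  by move=> x y h; rewrite !fE h.
have fn : forall x, f (x %% n)%N = f x.
  by move=> x; apply: fM; rewrite modn_dvdm.
have fq : forall x, f (q * x)%N = f x.
  move=> x; apply: fM; apply/eqP; rewrite eqn_mod_dvd; last by rewrite leq_pmull // ltnW.
  by rewrite -{2}[x]mul1n -mulnBl dvdn_mulr.
have ft : forall x, f (x + t)%N = ~~ f x.
  move=> x; rewrite /f /t addnC mulnC divnMDl ?expn_gt0 // oddD on1.
  by [].
have fnn : forall x y, (x = y %[mod n])%N -> f x = f y.
  by move=> x y h; apply: fM; apply: mod_dvd_cong h.
split.
  split.
    rewrite En /t mulnC ltn_pmul2l // ltn_exp2l //.
  apply/eqP; rewrite eqn_mod_dvd; last by rewrite leq_pmull // ltnW.
  rewrite -{2}[t]mul1n -mulnBl Eq /t En.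
  have -> : (c * 2 ^ b * (2 ^ u * n1) = n1 * (c * 2 ^ (b + u)))%N.
    by rewrite expnD; ring.
  apply: dvdn_mul => //.
  rewrite dvdn_mull // dvdn_exp2l //.
  lia.
have tn : (t <= n)%N.
  by rewrite En /t mulnC leq_pmul2l // leq_exp2l // ltnW.
exists [set i : 'I_n | ~~ f i].
split.
  apply/setP => j; rewrite /zimg !inE; apply/existsP/idP.
    case=> i /andP [iP /eqP e]; move: iP; rewrite !inE.
    by rewrite e fn /mu fq.
  move=> jP.
  have [i hi] := inv_mod n q n0 cqn j.
  exists (ordm n0 i); rewrite !inE /= fn.
  have -> : f i = f j.
    rewrite -fq; apply: fnn; rewrite hi //.
  rewrite jP /=; apply/eqP.
  by rewrite /mu modnMmr hi modn_small.
split.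
  apply/setP => j; rewrite !inE; apply/negP => /andP [jP /existsP [i /andP [iP /eqP e]]].
  move: jP iP; rewrite !inE e fn /rho mul1n ft.
  by case: (f i).
apply/setP => j; rewrite !inE.
case jP : (f j) => //=.
apply/existsP; exists (ordm n0 (j + (n - t))%N).
rewrite !inE /= fn /rho mul1n.
have e : ((j + (n - t)) %% n + t = j + n %[mod n])%N.
  by rewrite modnDml -addnA subnK.
apply/andP; split.
  have := ft (j + (n - t))%N.
  rewrite -addnA subnK // => <-.
  rewrite (fnn (j + n)%N j) ?jP //.
  by rewrite modnDr.
by apply/eqP; rewrite e modnDr modn_small.
Qed.

Close Scope ring_scope.

Theorem theorem3p10 (q n : nat) :
  prime_power q -> 0 < n -> coprime q n ->
  (typeI_exists n q <-> typeI_by_translation n q) /\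
  (typeI_by_translation n q <-> (0 < nu2 n /\ nu2 n < 2 * nu2 (q - 1))) /\
  (typeI_exists n q ->
     (exists u, nu2 n - nu2 (q - 1) <= u /\ u < minn (nu2 n) (nu2 (q - 1))) /\
     (forall u, nu2 n - nu2 (q - 1) <= u -> u < minn (nu2 n) (nu2 (q - 1)) ->
        q_fixed n q (2 ^ u * oddpart n) /\
        duadic_given_by n q 1 (2 ^ u * oddpart n))).
Proof.
move=> [p [e [pp [e0 Eq]]]] n0 cqn.
have q1 : 1 < q.
  rewrite Eq (leq_trans (prime_gt1 pp)) // -{1}(expn1 p) leq_pexp2l //.
  exact: prime_gt0.
have trA : typeI_by_translation n q -> 0 < nu2 n /\ nu2 n < 2 * nu2 (q - 1).
  by case=> t [qf d]; apply: (nec q n 1 t n0 q1 cqn (coprime1n n) qf d).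
have exA : typeI_exists n q -> 0 < nu2 n /\ nu2 n < 2 * nu2 (q - 1).
  by case=> s [t [_ [cs [qf d]]]]; apply: (nec q n s t n0 q1 cqn cs qf d).
have uok : 0 < nu2 n /\ nu2 n < 2 * nu2 (q - 1) ->
    nu2 n - nu2 (q - 1) <= nu2 n - nu2 (q - 1) /\
    nu2 n - nu2 (q - 1) < minn (nu2 n) (nu2 (q - 1)).
  move=> [h1 h2]; split => //; rewrite leq_min; apply/andP; split; lia.
have Atr : 0 < nu2 n /\ nu2 n < 2 * nu2 (q - 1) -> typeI_by_translation n q.
  move=> hA; have [u1 u2] := uok hA; case: hA => h1 h2.
  exists (2 ^ (nu2 n - nu2 (q - 1)) * oddpart n).
  exact: (suff q n _ n0 q1 cqn h1 h2 u1 u2).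
have Aex : 0 < nu2 n /\ nu2 n < 2 * nu2 (q - 1) -> typeI_exists n q.
  move=> hA; have [t [qf d]] := Atr hA.
  exists 1, t; split.
    case: hA => h1 _.
    have : n != 1 by apply/eqP => en; move: h1; rewrite /nu2 en logn1.
    lia.
  by split; [apply: coprime1n | split].
split; first by split => h; [apply: Atr; apply: exA | apply: Aex; apply: trA].
split; first by split; [apply: trA | apply: Atr].
move=> hE; have hA := exA hE; split.
  by exists (nu2 n - nu2 (q - 1)); apply: uok.
by move=> u u1 u2; case: hA => h1 h2; apply: suff.
Qed.
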